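(* Let $p>2$ be a prime and $g$ a generator of $U(\mathbb Z/p\mathbb Z)$. Let $\beta_1\in\mathbb R$ and $\beta_2>0$, let $\varphi=\cos\frac{2\pi}{p-1}+i\sin\frac{2\pi}{p-1}$ and $\tau=\cos\frac{2\pi}{p}+i\sin\frac{2\pi}{p}$, and consider the lists $$\Sigma=(\beta_1,\beta_2,\beta_2\varphi,\beta_2\varphi^2,\dots,\beta_2\varphi^{p-2}),\qquad \Sigma'=(\beta_1,\beta_2\tau,\beta_2\tau^2,\dots,\beta_2\tau^{p-1}).$$ If $C=circ(c_1,\dots,c_p)$ is the real circulant matrix whose eigenvalues $\lambda_k=\sum_{\ell=1}^p c_\ell\tau^{(k-1)(\ell-1)}$, $1\le k\le p$, are the components of $\Sigma'$ in this order, then $A=Q_gC$ is a real $g$-circulant matrix whose eigenvalues can be ordered as the components of $\Sigma$.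
   Context: $circ(c_1,\dots,c_p)$ is the circulant matrix with $(i,j)$ entry $c_{j-i+1}$ (subscripts mod $p$ in $\{1,\dots,p\}$). $Q_g$ is the $p\times p$ permutation matrix whose $(i,j)$ entry is $1$ if $j\equiv 1+(i-1)g\pmod p$ and $0$ otherwise. A $g$-circulant matrix is one in which each row is the preceding row cyclically shifted $g$ places to the right. *)

(* Defs.v *)
From HB Require Import structures.
From mathcomp Require Import all_boot all_order all_algebra.
From mathcomp Require Import complex.
From mathcomp Require Import reals trigo.
Set Implicit Arguments. Unset Strict Implicit. Unset Printing Implicit Defensive.
Import Order.TTheory GRing.Theory Num.Theory.
Local Open Scope ring_scope.
Local Open Scope complex_scope.

Definition is_generator_mod (p g : nat) : Prop :=
  coprime g p /\ forall u : nat, coprime u p -> exists k : nat, g ^ k = u %[mod p].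

(* circ(c_1,...,c_p), with 0-based indices: c_l is  c (l-1); entry (i,j) = c_{(j-i) mod p} *)
Definition circ (R : Type) (p : nat) (c : nat -> R) : 'M[R]_p :=
  \matrix_(i < p, j < p) c ((j + p - i) %% p)%N.

Definition Qmat (R : nzRingType) (p g : nat) : 'M[R]_p :=
  \matrix_(i < p, j < p) (if (nat_of_ord j == (i * g) %% p)%N then 1 else 0).

Definition g_circulant (R : Type) (p g : nat) (A : 'M[R]_p) : Prop :=
  forall i i' j j' : 'I_p, i' = i.+1 :> nat -> j' = ((j + g) %% p)%N :> nat ->
    A i' j' = A i j.

Definition unit_root (R : realType) (n : nat) : R[i] :=
  (cos (2 * pi / n%:R)) +i* (sin (2 * pi / n%:R)).

Definition Sigma (R : realType) (p : nat) (b1 b2 : R) (k : nat) : R[i] :=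
  if k == 0%N then b1%:C else b2%:C * (unit_root R p.-1) ^+ k.-1.

Definition Sigma' (R : realType) (p : nat) (b1 b2 : R) (k : nat) : R[i] :=
  if k == 0%N then b1%:C else b2%:C * (unit_root R p) ^+ k.

(* Main.v *)
Require Import Defs.
From HB Require Import structures.
From mathcomp Require Import all_boot all_order all_algebra.
From mathcomp Require Import complex.
From mathcomp Require Import reals trigo.
From mathcomp Require cyclic.
From mathcomp Require Import lra ring zify.
Import Order.TTheory GRing.Theory Num.Theory.
Local Open Scope ring_scope.
Local Open Scope complex_scope.

Section NT.
Local Open Scope nat_scope.
Variables (p g : nat).
Hypotheses (pp : prime p) (p2 : 2 < p) (gen : is_generator_mod p g).

Lemma p_gt1 : 1 < p. Proof. exact: prime_gt1. Qed.

Lemma g_ord : g ^ p.-1 %% p = 1.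
Proof.
have := cyclic.Euler_exp_totient gen.1; rewrite totient_prime // => ->.
by rewrite modn_small // p_gt1.
Qed.

Lemma gX_nz s : g ^ s %% p != 0.
Proof.
apply/negP => /eqP/eqP; rewrite -/(dvdn p _) => hd.
have : coprime (g ^ s) p by rewrite coprimeXl // gen.1.
rewrite coprime_sym prime_coprime // hd. by [].
Qed.

Lemma gX_mod k : g ^ (k %% p.-1) %% p = g ^ k %% p.
Proof.
have -> : g ^ k = (g ^ p.-1) ^ (k %/ p.-1) * g ^ (k %% p.-1).
  by rewrite -expnM -expnD mulnC -divn_eq.
have h : (g ^ p.-1) ^ (k %/ p.-1) %% p = 1.
  by rewrite -modnXm g_ord exp1n modn_small ?p_gt1.
by rewrite -modnMml h mul1n.
Qed.

Lemma gX_ex (u : 'I_p.-1) : exists s : 'I_p.-1, g ^ s %% p == u.+1.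
Proof.
have cu : coprime u.+1 p.
  rewrite coprime_sym prime_coprime //; apply/negP => /dvdn_leq => /(_ isT).
  have := ltn_ord u; lia.
have [k hk] := gen.2 _ cu.
have p1 : (0 < p.-1)%N by case: (p) p2 => // q; lia.
exists (Ordinal (ltn_pmod k p1)) => /=.
rewrite gX_mod hk modn_small //.
have := ltn_ord u; lia.
Qed.

Definition hinv (u : 'I_p.-1) : 'I_p.-1 := odflt u [pick s : 'I_p.-1 | g ^ s %% p == u.+1].

Lemma hinvP u : g ^ hinv u %% p = u.+1.
Proof.
rewrite /hinv; case: pickP => [s /eqP //|none].
by have [s hs] := gX_ex u; rewrite none in hs.
Qed.

Lemma hinv_inj : injective hinv.
Proof. by move=> u u' e; have := hinvP u; rewrite e hinvP => -[] /val_inj. Qed.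

Lemma gX_inj (s s' : 'I_p.-1) : g ^ s %% p = g ^ s' %% p -> s = s'.
Proof.
have hb := injF_bij hinv_inj.
have [h' hK h'K] := hb.
rewrite -(h'K s) -(h'K s') !hinvP => -[] e.
by congr hinv; apply: val_inj.
Qed.

Lemma sum_geom k : (\sum_(i < k) g ^ i) * (g - 1) + 1 = g ^ k.
Proof.
have g1 : (0 < g)%N.
  case: g gen => // -[] /=; rewrite /coprime gcd0n => /eqP hp.
  by move: p2; rewrite hp.
elim: k => [|k IH]; first by rewrite big_ord0.
rewrite big_ord_recr /= mulnDl -addnAC IH expnS.
rewrite mulnBr muln1 [g * _]mulnC; have : (g ^ k <= g ^ k * g)%N by rewrite leq_pmulr.
lia.
Qed.

Lemma sum_geom_dvd : p %| \sum_(i < p.-1) g ^ i.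
Proof.
have g1 : (0 < g)%N.
  case: g gen => // -[] /=; rewrite /coprime gcd0n => /eqP hp.
  by move: p2; rewrite hp.
have h1 : p %| (\sum_(i < p.-1) g ^ i) * (g - 1).
  have := g_ord; rewrite -(sum_geom p.-1) => e.
  have : (\sum_(i < p.-1) g ^ i) * (g - 1) + 1 == 0 + 1 %[mod p].
    by rewrite e add0n modn_small ?p_gt1.
  by rewrite eqn_modDr mod0n.
rewrite Euclid_dvdM // in h1; case/orP: h1 => // hg.
exfalso.
have gm : g %% p = 1.
  have : g == 1 %[mod p] by rewrite eqn_mod_dvd.
  by rewrite (modn_small (p_gt1)) => /eqP.
have c2 : coprime 2 p.
  rewrite coprime_sym prime_coprime //; apply/negP => /dvdn_leq => /(_ isT).
  by move: p2; rewrite ltnNge => /negP.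
have [k hk] := gen.2 _ c2.
move: hk; rewrite -modnXm gm exp1n (modn_small p_gt1) modn_small //.
Qed.

End NT.

Section S.
Variable R : realType.
Lemma unit_root_exp n k : unit_root R n ^+ k =
  (cos (k%:R * (2 * pi / n%:R))) +i* (sin (k%:R * (2 * pi / n%:R))).
Proof.
elim: k => [|k IH]; first by rewrite expr0 !mul0r cos0 sin0.
rewrite exprSr IH /unit_root.
set x := (2 * pi / n%:R).
rewrite [_ * (_ +i* _)]/GRing.mul /=.
rewrite -addn1 natrD mulrDl mul1r cosD sinD.
by congr (_ +i* _); rewrite addrC.
Qed.

Lemma unit_root_prim n : (0 < n)%N -> n.-primitive_root (unit_root R n).
Proof.
move=> n0; apply/andP; split=> //; apply/forallP => i.
rewrite unity_rootE unit_root_exp.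
have n0' : (n%:R : R) != 0 by rewrite pnatr_eq0 -lt0n.
case: (i.+1 =P n) => [e|/eqP ne].
  rewrite eqb_id e mulrCA divff // mulr1 mulr_natl cos2pi sin2pi. by [].
rewrite eqbF_neg; apply/negP => /eqP [] hc hs.
set y := (i.+1%:R * (2 * pi / n%:R)) in hc hs.
have y0 : 0 < y.
  by rewrite /y mulr_gt0 // ?ltr0n // divr_gt0 ?mulr_gt0 ?pi_gt0 ?ltr0n.
have y2 : y < 2 * pi.
  rewrite /y mulrA ltr_pdivrMr ?ltr0n // [X in X < _]mulrC ltr_pM2l ?mulr_gt0 ?pi_gt0 ?ltr0n //.
  have : (i.+1 < n)%N by rewrite ltn_neqAle ne; exact: ltn_ord.
  by rewrite -(ltr_nat R).
have [ylt|yge] := ltrP y pi.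
  by have := @sin_gt0_pi R y; rewrite hs ltxx y0 ylt => /(_ isT).
have [yeq|ygt] := eqVneq y pi.
  by move: hc; rewrite yeq cospi => /eqP; rewrite -subr_eq0 -opprD oppr_eq0 (pnatr_eq0 R 2).
have ygt' : pi < y by rewrite lt_neqAle eq_sym ygt yge.
have := @sin_gt0_pi R (y - pi).
have -> : sin (y - pi) = - sin y.
  by rewrite -[in RHS](subrK pi y) sinDpi opprK.
rewrite hs oppr0 ltxx subr_gt0 ygt' /= ltrBlDr.
have -> : pi + pi = 2 * (pi : R) by rewrite mulr_natl mulr2n.
by rewrite y2 => /(_ isT).
Qed.
End S.

Section Poly.
Variable F : fieldType.

Lemma char_poly_sim n (A N W : 'M[F]_n) :
  A *m W = W *m N -> W \in unitmx -> char_poly A = char_poly N.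
Proof.
move=> hAW Wu.
have eN : N = invmx W *m A *m W by rewrite -mulmxA hAW mulmxA mulVmx // mul1mx.
rewrite /char_poly.
have -> : char_poly_mx N =
   map_mx polyC (invmx W) *m char_poly_mx A *m map_mx polyC W.
  rewrite /char_poly_mx mulmxBr mulmxBl eN !map_mxM mul_mx_scalar -scalemxAl.
  congr (_ - _).
  apply/matrixP => i j; rewrite !mxE; under eq_bigr do rewrite !mxE.
  have -> : \sum_k (invmx W i k)%:P * (W k j)%:P = ((invmx W *m W) i j)%:P.
    by rewrite mxE rmorph_sum; apply: eq_bigr => k _; rewrite rmorphM.
  by rewrite mulVmx // !mxE; case: (i == j); rewrite ?mulr1n ?mulr1 ?mulr0n ?mulr0.
rewrite !det_mulmx !det_map_mx mulrC mulrA -rmorphM -det_mulmx.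
by rewrite mulmxV // det1 mul1r.
Qed.

Lemma char_poly_castmx d d' (e : d = d') (M : 'M[F]_d) :
  char_poly (castmx (e, e) M) = char_poly M.
Proof. by case: d' / e; rewrite castmx_id. Qed.

Lemma char_poly_tr n (M : 'M[F]_n) : char_poly M^T = char_poly M.
Proof.
rewrite /char_poly -det_tr; congr (\det _).
by rewrite /char_poly_mx linearB /= tr_scalar_mx map_trmx trmxK.
Qed.

Definition Kmx d (a : F) : 'M[F]_d.+1 :=
  \matrix_(i, j) (if j == d :> nat then (i == 0 :> nat)%:R * a else (i == j.+1 :> nat)%:R).

Lemma char_poly_Kmx d a : char_poly (Kmx d a) = 'X^(d.+1) - a%:P.
Proof.
set q := 'X^(d.+1) - a%:P.
have sq : size q = d.+2 by rewrite size_XnsubC.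
have e : (size q).-1 = d.+1 by rewrite sq.
have -> : Kmx d a = castmx (e, e) (companionmx q)^T.
  apply/matrixP => i j; rewrite castmxE !mxE /=.
  rewrite sq /= coefB coefXn coefC.
  have := ltn_ord i; have := ltn_ord j.
  case: eqP => [->|ne] hj hi.
    rewrite (ltn_eqF hi); case: (i == 0 :> nat); rewrite /= ?mul1r ?mul0r; ring.
  by rewrite eq_sym.
by rewrite char_poly_castmx char_poly_tr companionmxK // monicXnsubC.
Qed.

Lemma prod_scaled_roots n (z a : F) : n.-primitive_root z -> a != 0 ->
  \prod_(k < n) ('X - (a * z ^+ k)%:P) = 'X^n - (a ^+ n)%:P.
Proof.
move=> pz a0.
have n0 := prim_order_gt0 pz.
set rs := [seq a * z ^+ k | k <- index_iota 0 n].
have -> : \prod_(k < n) ('X - (a * z ^+ k)%:P) = \prod_(w <- rs) ('X - w%:P).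
  by rewrite big_map -(big_mkord xpredT (fun k => 'X - (a * z ^+ k)%:P)).
rewrite [in RHS](@all_roots_prod_XsubC _ ('X^n - (a ^+ n)%:P) rs).
- by rewrite lead_coefXnsubC // scale1r.
- by rewrite size_XnsubC // size_map size_iota subn0.
- apply/allP=> _ /mapP[i _ ->] /=; rewrite rootE !hornerE.
  by rewrite exprMn exprAC (prim_expr_order pz) expr1n mulr1 subrr.
rewrite uniq_rootsE map_inj_in_uniq ?iota_uniq // => i j.
rewrite !mem_index_iota /= => ltin ltjn /mulfI => /(_ a0) /eqP.
by rewrite (eq_prim_root_expr pz) !modn_small // => /eqP.
Qed.
End Poly.

Section Mat.
Variables (R : realType) (m g : nat) (b1 b2 : R) (c : nat -> R).
Local Notation p := m.+2.
Local Notation tau := (unit_root R m.+2).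
Hypothesis tau_prim : p.-primitive_root tau.

Definition v k : 'cV[R[i]]_p := \col_j (tau ^+ (j * k)).
Definition lam k : R[i] := \sum_(l < p) (c l)%:C * tau ^+ (k * l).

Lemma circ_v k : map_mx (fun x : R => x%:C) (circ p c) *m v k = lam k *: v k.
Proof.
apply/colP => i; rewrite !mxE.
pose f (l : 'I_p) : 'I_p := Ordinal (ltn_pmod (l + i) (ltn0Sn m.+1)).
have finj : injective f.
  move=> l l' /(congr1 val) /= /eqP; rewrite eqn_modDr !modn_small // => /eqP.
  exact: val_inj.
rewrite (reindex_inj finj) /lam mulr_suml; apply: eq_bigr => l _.
rewrite !mxE /=.
have -> : (((l + i) %% p + p - i) %% p = l)%N.
  rewrite -addnBA; last exact: ltnW.
  by rewrite modnDml -addnA subnKC ?modnDr ?modn_small // ltnW.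
rewrite -mulrA; congr (_ * _).
rewrite -exprD -(prim_expr_mod tau_prim) modnMml (prim_expr_mod tau_prim).
by congr (_ ^+ _); ring.
Qed.


Lemma tau_mod a b : (a %% p = b %% p)%N -> tau ^+ a = tau ^+ b.
Proof. by move=> e; rewrite -(prim_expr_mod tau_prim) e prim_expr_mod. Qed.

Lemma Q_v k : map_mx (fun x : R => x%:C) (Qmat R p g) *m v k = v (k * g).
Proof.
apply/colP => i; rewrite !mxE.
pose j0 : 'I_p := Ordinal (ltn_pmod (i * g) (ltn0Sn m.+1)).
rewrite (bigD1 j0) //= big1 ?addr0.
  rewrite !mxE eqxx mul1r; apply: tau_mod.
  by rewrite /= modnMml; congr (_ %% _)%N; ring.
move=> j ne; rewrite !mxE.
have -> : (nat_of_ord j == (i * g) %% p)%N = false.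
  by apply/negP => /eqP e; move/eqP: ne; apply; apply: val_inj.
by rewrite mul0r.
Qed.

Lemma A_v0 k : map_mx (fun x : R => x%:C) (Qmat R p g *m circ p c) *m v k = lam k *: v (k * g).
Proof.
rewrite map_mxM -mulmxA circ_v -scalemxAr Q_v. by [].
Qed.

Hypotheses (pp : prime p) (p2 : (2 < p)%N) (gen : is_generator_mod p g) (b2pos : 0 < b2)
  (hc : forall k : 'I_p,
     \sum_(l < p) (c l)%:C * (unit_root R p) ^+ (k * l) = Sigma' p b1 b2 k).

Local Notation Ap := (map_mx (fun x : R => x%:C) (Qmat R p g *m circ p c)).

Lemma lam0 : lam 0 = b1%:C.
Proof. by have := hc ord0; rewrite /Sigma' /=. Qed.

Lemma lam_nz k : ~~ (p %| k)%N -> lam k = b2%:C * tau ^+ k.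
Proof.
move=> hk.
have -> : lam k = lam (k %% p).
  by rewrite /lam; apply: eq_bigr => l _; congr (_ * _); apply: tau_mod; rewrite modnMml.
rewrite /lam; have := hc (Ordinal (ltn_pmod k (ltn0Sn m.+1))); rewrite /= => ->.
rewrite /Sigma'; move: hk; rewrite /dvdn => /negbTE ->.
by rewrite (prim_expr_mod tau_prim).
Qed.

Definition Ssum s := (\sum_(i < s) g ^ i)%N.
Definition Kv s := ((b2%:C) ^+ s * tau ^+ (Ssum s)) *: v (g ^ s).

Lemma Kv_next s : Ap *m Kv s = Kv s.+1.
Proof.
rewrite /Kv -scalemxAr A_v0 lam_nz; last first.
  by rewrite /dvdn; apply: (gX_nz _ _ pp gen).
rewrite scalerA -expnSr /Ssum big_ord_recr /= exprD exprSr; congr (_ *: _).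
by rewrite !mulrA; congr (_ * _); rewrite -!mulrA; congr (_ * _); rewrite mulrC.
Qed.

Lemma Kv0 : Kv 0 = v 1.
Proof. by rewrite /Kv /Ssum big_ord0 !expr0 mulr1 scale1r expn0. Qed.

Lemma Kv_wrap : Kv m.+1 = b2%:C ^+ m.+1 *: v 1.
Proof.
rewrite /Kv.
have -> : tau ^+ Ssum m.+1 = 1.
  apply/eqP; rewrite -(prim_order_dvd tau_prim); exact: (sum_geom_dvd _ _ pp p2 gen).
rewrite mulr1; congr (_ *: _); apply/colP => j; rewrite !mxE; apply: tau_mod.
by rewrite -modnMmr (g_ord _ _ pp gen).
Qed.


Definition Wm : 'M[R[i]]_p :=
  \matrix_(r, t) (if t == 0 :> nat then v 0 r 0 else Kv t.-1 r 0).
Definition Nm : 'M[R[i]]_p := \matrix_(i, t)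
  (if t == 0 :> nat then (i == 0 :> nat)%:R * b1%:C
   else if t == m.+1 :> nat then (i == 1 :> nat)%:R * b2%:C ^+ m.+1
   else (i == t.+1 :> nat)%:R).

Lemma AW : Ap *m Wm = Wm *m Nm.
Proof.
apply/matrixP => r t.
have colL : forall (u : 'cV_p), (forall j, Wm j t = u j 0) ->
    (Ap *m Wm) r t = (Ap *m u) r 0.
  by move=> u hu; rewrite !mxE; apply: eq_bigr => j _; rewrite hu.
have colR : forall (i0 : 'I_p) a, (forall j, Nm j t = (j == i0 :> nat)%:R * a) ->
    (Wm *m Nm) r t = Wm r i0 * a.
  move=> i0 a hN; rewrite mxE (bigD1 i0) //= big1 ?addr0.
    by rewrite hN eqxx mul1r.
  move=> j ne; rewrite hN; case: eqP => [/val_inj e|]; first by rewrite e eqxx in ne.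
  by rewrite mul0r mulr0.
have [t0|tn0] := eqVneq (nat_of_ord t) 0%N.
  rewrite (colL (v 0)); last by move=> j; rewrite mxE t0.
  rewrite (colR ord0 (b1%:C)); last by move=> j; rewrite mxE t0.
  by rewrite A_v0 lam0 mul0n !mxE /= mulrC.
have [tm|tnm] := eqVneq (nat_of_ord t) m.+1.
  rewrite (colL (Kv m)); last by move=> j; rewrite mxE (negbTE tn0) tm.
  rewrite (colR (Ordinal (isT : (1 < m.+2)%N)) (b2%:C ^+ m.+1)); last first.
    by move=> j; rewrite mxE (negbTE tn0) tm eqxx.
  by rewrite Kv_next Kv_wrap -Kv0 !mxE /= mulrC.
have ht1 : (t.+1 < m.+2)%N.
  move: tnm (ltn_ord t); lia.
rewrite (colL (Kv t.-1)); last by move=> j; rewrite mxE (negbTE tn0).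
rewrite (colR (Ordinal ht1) 1); last first.
  by move=> j; rewrite mxE (negbTE tn0) (negbTE tnm) mulr1.
rewrite Kv_next prednK ?lt0n // mulr1 !mxE /=.
done.
Qed.


Lemma tau_neq0 : tau != 0.
Proof.
apply/eqP => h; have := prim_expr_order tau_prim; rewrite h expr0n /=.
by move/eqP; rewrite eq_sym oner_eq0.
Qed.

Lemma b2C_neq0 : b2%:C != 0.
Proof.
apply/eqP => -[] h; by move: b2pos; rewrite h ltxx.
Qed.

Lemma W_unit : Wm \in unitmx.
Proof.
pose e (t : 'I_p) := if t == 0 :> nat then 0%N else (g ^ t.-1)%N.
pose a := \row_(t < p) tau ^+ e t.
pose d := \row_(t < p) (if t == 0 :> nat then 1 else b2%:C ^+ t.-1 * tau ^+ Ssum t.-1).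
have -> : Wm = Vandermonde p a *m diag_mx d.
  apply/matrixP => r t; rewrite mul_mx_diag !mxE /e.
  case: eqP => _; first by rewrite muln0 !expr0 expr1n mulr1.
  by rewrite mulrC -exprM mulnC.
rewrite unitmxE unitfE det_mulmx det_Vandermonde det_diag mulf_neq0 //.
  apply/prodf_neq0 => i _; apply/prodf_neq0 => j lij.
  rewrite !mxE subr_eq0 (eq_prim_root_expr tau_prim) /e.
  have jn0 : (nat_of_ord j != 0)%N by move: lij; case: (nat_of_ord j).
  rewrite (negbTE jn0).
  case: ifP => [_|/negbT in0].
    by rewrite mod0n; apply: (gX_nz _ _ pp gen).
  apply/negP => /eqP h.
  have hj : (j.-1 < p.-1)%N by have := ltn_ord j; move: jn0; lia.
  have hi : (i.-1 < p.-1)%N by have := ltn_ord i; move: in0; lia.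
  have := gX_inj _ _ pp p2 gen (Ordinal hj) (Ordinal hi) h.
  move/(congr1 val) => /=; move: lij jn0 in0; lia.
apply/prodf_neq0 => t _; rewrite mxE.
case: ifP => _; first exact: oner_neq0.
by rewrite mulf_neq0 // expf_neq0 // ?b2C_neq0 ?tau_neq0.
Qed.


Lemma Nm_K : row' ord0 (col' ord0 Nm) = Kmx _ m (b2%:C ^+ m.+1).
Proof.
apply/matrixP => i j; rewrite !mxE /= /bump /= !add1n !eqSS.
by case: ifP.
Qed.

Lemma char_poly_Nm :
  char_poly Nm = ('X - (b1%:C)%:P) * ('X^(m.+1) - (b2%:C ^+ m.+1)%:P).
Proof.
rewrite /char_poly (expand_det_col _ ord0) (bigD1 ord0) //= big1 ?addr0; last first.
  move=> i ne; rewrite !mxE /=.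
  have -> : (nat_of_ord i == 0%N) = false.
    by apply: contraNF ne => /eqP h; apply/eqP; exact: val_inj.
  by rewrite (negbTE ne) mulr0n raddf0; ring.
rewrite /cofactor (row'_col'_char_poly_mx ord0 Nm) Nm_K.
have -> : \det (char_poly_mx (Kmx _ m (b2%:C ^+ m.+1))) = char_poly (Kmx _ m (b2%:C ^+ m.+1)) by [].
rewrite char_poly_Kmx !mxE /= mul1r expr0 mul1r mulr1n.
by [].
Qed.

End Mat.

Section Circ.
Local Open Scope nat_scope.

Lemma D_spec p x y : 0 < p -> ((x %% p + p - y %% p) %% p + y) %% p = x %% p.
Proof.
move=> p0; rewrite modnDml -modnDmr subnK; last first.
  by apply: leq_trans (ltnW (ltn_pmod y p0)) (leq_addl _ _).
by rewrite modnDr modn_mod.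
Qed.

Lemma D_uniq p r r' y : r < p -> r' < p -> (r + y) %% p = (r' + y) %% p -> r = r'.
Proof.
move=> hr hr' /eqP; rewrite eqn_modDr !modn_small // => /eqP //.
Qed.
Lemma D_spec' p x y : x < p -> ((x + p - y %% p) %% p + y) %% p = x.
Proof.
move=> hx; have p0 : 0 < p by apply: leq_ltn_trans hx.
by have := D_spec p x y p0; rewrite (modn_small hx).
Qed.
End Circ.

Lemma entryA (R : realType) m g (c : nat -> R) (i j : 'I_m.+2) :
  (Qmat R m.+2 g *m circ m.+2 c) i j = c ((j + m.+2 - (i * g) %% m.+2) %% m.+2)%N.
Proof.
rewrite mxE (bigD1 (Ordinal (ltn_pmod (i * g) (ltn0Sn m.+1)))) //= big1 ?addr0.
  by rewrite !mxE eqxx mul1r.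
move=> k ne; rewrite !mxE.
have -> : (nat_of_ord k == (i * g) %% m.+2)%N = false.
  by apply: contraNF ne => /eqP h; apply/eqP; exact: val_inj.
by rewrite mul0r.
Qed.

Theorem mainTheorem9 (R : realType) (p g : nat) (b1 b2 : R) (c : nat -> R) :
  prime p -> (2 < p)%N -> is_generator_mod p g -> 0 < b2 ->
  (forall k : 'I_p,
     \sum_(l < p) (c l)%:C * (unit_root R p) ^+ (k * l) = Sigma' p b1 b2 k) ->
  let A := Qmat R p g *m circ p c in
  g_circulant g A /\
  char_poly (map_mx (fun x : R => x%:C) A) =
    \prod_(k < p) ('X - (Sigma p b1 b2 k)%:P).
Proof.
move=> pp p2.
have [m hm] : exists m, p = m.+2 by exists p.-2; lia.
subst p => gen b2pos hc A; split.
  move=> i i' j j' hi hj; rewrite /A !entryA; congr c.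
  apply: (@D_uniq m.+2 _ _ (i' * g)); rewrite ?ltn_pmod //.
  rewrite D_spec' // hi mulSn addnCA -modnDmr D_spec' // addnC hj.
  by [].
have tp := unit_root_prim R m.+2 (ltn0Sn m.+1).
rewrite /A (char_poly_sim _ _ _ _ _ (AW _ _ _ _ _ _ tp pp p2 gen b2pos hc) (W_unit _ _ _ _ tp pp p2 gen b2pos)).
rewrite char_poly_Nm big_ord_recl /=; congr (_ * _).
rewrite -(prod_scaled_roots _ _ _ _ (unit_root_prim R m.+1 (ltn0Sn m)) (b2C_neq0 _ _ b2pos)).
by apply: eq_bigr => k _.
Qed.
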